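(* There is a function $g:\mathbb{N}\to\mathbb{N}$ such that $\mathrm{tpw}(G)\le g(\mathrm{ecrw}(G))$ for every graph $G$. Consequently, together with $\mathrm{ecrw}(G)\le\mathrm{tpw}(G)$, edge-crossing width and tree-partition-width are functionally equivalent.
   Context: A tree-cut decomposition of a graph $G$ is a pair $\mathcal{T}=(T,\{X_t\}_{t\in V(T)})$ where $T$ is a tree and the bags $X_t\subseteq V(G)$ are pairwise disjoint (possibly empty) with $\bigcup_{t\in V(T)}X_t=V(G)$. For a node $t$ of $T$, let $T_1,\dots,T_m$ be the connected components of $T-t$ and $Z_i=\bigcup_{s\in V(T_i)}X_s$; $\mathrm{cross}_{\mathcal{T}}(t)$ is the number of edges of $G$ whose two endpoints lie in two distinct sets among $Z_1,\dots,Z_m$ (if $T$ has one node, $\mathrm{cross}_{\mathcal T}(t)=0$). The crossing number of $\mathcal{T}$ is $\max_{t}\mathrm{cross}_{\mathcal{T}}(t)$, and the thickness of $\mathcal{T}$ is $\max_t|X_t|$. The edge-crossing width of $\mathcal T$ is the maximum of its crossing number and its thickness, and $\mathrm{ecrw}(G)$ is the minimum edge-crossing width over all tree-cut decompositions of $G$. A tree-partition of $G$ is a tree-cut decomposition $(T,\{X_t\})$ such that for every edge $uv$ of $G$, either $u,v$ lie in the same bag, or $u\in X_{t_1}$, $v\in X_{t_2}$ for some edge $t_1t_2$ of $T$. The tree-partition-width $\mathrm{tpw}(G)$ is the minimum thickness over all tree-partitions of $G$. *)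

(* Defs.v *)
From mathcomp Require Import all_boot.
From mathcomp Require Import boolp.

Set Implicit Arguments.
Unset Strict Implicit.
Unset Printing Implicit Defensive.

(* A (finite simple) graph G is given by a finType V of vertices and a
   symmetric irreflexive adjacency relation e : rel V (hypotheses of the theorem). *)

(* T is a tree: nonempty, simple (symmetric, irreflexive), connected, and has
   exactly n-1 edges (2(n-1) ordered adjacent pairs). *)
Definition is_tree (n : nat) (a : rel 'I_n) : Prop :=
  [/\ 0 < n, symmetric a, irreflexive a,
      (forall s t, connect a s t) &
      #|[set p : 'I_n * 'I_n | a p.1 p.2]| = 2 * (n - 1)].

Definition is_tcd (V : finType) (n : nat) (a : rel 'I_n) (X : 'I_n -> {set V}) : Prop :=
  [/\ is_tree a,
      (forall s t, s != t -> [disjoint X s & X t]) &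
      (forall v : V, exists t, v \in X t)].

Definition del_rel (n : nat) (a : rel 'I_n) (t : 'I_n) : rel 'I_n :=
  fun x y => [&& a x y, x != t & y != t].

Definition crosses (V : finType) (n : nat) (a : rel 'I_n) (X : 'I_n -> {set V})
    (t : 'I_n) (u v : V) : bool :=
  [exists s : 'I_n, exists s' : 'I_n,
     [&& u \in X s, v \in X s', s != t, s' != t &
         ~~ connect (del_rel a t) s s']].

Definition cross (V : finType) (e : rel V) (n : nat) (a : rel 'I_n)
    (X : 'I_n -> {set V}) (t : 'I_n) : nat :=
  #|[set S : {set V} | [exists u : V, exists v : V,
        [&& e u v, S == [set u; v] & crosses a X t u v]]]|.

Definition crossing_number (V : finType) (e : rel V) (n : nat) (a : rel 'I_n)
    (X : 'I_n -> {set V}) : nat :=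
  \max_(t < n) cross e a X t.

Definition thickness (V : finType) (n : nat) (X : 'I_n -> {set V}) : nat :=
  \max_(t < n) #|X t|.

Definition ec_width (V : finType) (e : rel V) (n : nat) (a : rel 'I_n)
    (X : 'I_n -> {set V}) : nat :=
  maxn (crossing_number e a X) (thickness X).

Definition ecrw_le (V : finType) (e : rel V) (k : nat) : Prop :=
  exists n (a : rel 'I_n) (X : 'I_n -> {set V}), is_tcd a X /\ ec_width e a X <= k.

Definition is_tree_partition (V : finType) (e : rel V) (n : nat) (a : rel 'I_n)
    (X : 'I_n -> {set V}) : Prop :=
  is_tcd a X /\
  (forall (u v : V) (s s' : 'I_n), e u v -> u \in X s -> v \in X s' ->
     s = s' \/ a s s').

Definition tpw_le (V : finType) (e : rel V) (k : nat) : Prop :=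
  exists n (a : rel 'I_n) (X : 'I_n -> {set V}),
    is_tree_partition e a X /\ thickness X <= k.

Lemma trivial_tree_partition (V : finType) (e : rel V) :
  is_tree_partition e (fun _ _ : 'I_1 => false) (fun _ => [set: V]).
Proof.
split.
  split.
  - split => //.
    + by move=> s t; rewrite (ord1 s) (ord1 t) connect0.
    + apply/eqP; rewrite cards_eq0; apply/eqP/setP => p; by rewrite !inE.
  - by move=> s t; rewrite (ord1 s) (ord1 t) eqxx.
  - by move=> v; exists ord0; rewrite inE.
by move=> u v s s' _ _ _; left; rewrite (ord1 s) (ord1 s').
Qed.

Lemma ecrw_ex (V : finType) (e : rel V) : exists k, `[< ecrw_le e k >].
Proof.
exists (ec_width e (fun _ _ : 'I_1 => false) (fun _ => [set: V])).
apply/asboolP; exists 1, (fun _ _ => false), (fun _ => [set: V]); split => //.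
by case: (trivial_tree_partition e).
Qed.

Lemma tpw_ex (V : finType) (e : rel V) : exists k, `[< tpw_le e k >].
Proof.
exists (thickness (fun _ : 'I_1 => [set: V])).
apply/asboolP; exists 1, (fun _ _ => false), (fun _ => [set: V]); split => //.
exact: trivial_tree_partition.
Qed.

Definition ecrw (V : finType) (e : rel V) : nat := ex_minn (ecrw_ex e).
Definition tpw (V : finType) (e : rel V) : nat := ex_minn (tpw_ex e).

(* Main.v *)
Require Import Defs.
From mathcomp Require Import all_boot.
From mathcomp Require Import zify.
From mathcomp Require boolp.
Set Implicit Arguments. Unset Strict Implicit. Unset Printing Implicit Defensive.

Lemma path_switch (T : Type) (e : rel T) (P : pred T) x s :
  path e x s -> ~~ P x -> P (last x s) -> exists u v, [/\ e u v, ~~ P u & P v].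
Proof.
elim: s x => [|y s IH] x /=; first by move=> _ /negP nP /nP.
case/andP=> exy pys nPx; case: (boolP (P y)) => Py.
  by exists x, y.
exact: IH.
Qed.

Lemma classes_bound (T T' : finType) (h : rel T) (C : {set T}) (f : T -> T') :
  (forall x y, x \in C -> y \in C -> connect [rel u v | [&& h u v, u \in C & v \in C]] x y) ->
  #|f @: C| <= 1 + #|[set x in C | [exists y in C, h y x && (f y != f x)]]|.
Proof.
move=> Hc; case: (set_0Vmem C) => [->|[c0 c0C]]; first by rewrite imset0 cards0.
set Bd := [set x in C | _].
have sub : f @: C \subset f c0 |: f @: Bd.
  apply/subsetP => _ /imsetP [c cC ->]; rewrite in_setU1.
  case: (eqVneq (f c) (f c0)) => //= ne.
  have := Hc _ _ c0C cC => /connectP [s ps lst].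
  have := @path_switch _ _ (fun z => f z == f c) _ _ ps.
  rewrite -lst eqxx eq_sym ne => /(_ isT isT) [u [v [/and3P [huv uC vC] nPu Pv]]].
  apply/imsetP; exists v; last by rewrite (eqP Pv).
  rewrite inE vC; apply/existsP; exists u; rewrite uC huv (eqP Pv) /=. exact: nPu.
rewrite (leq_trans (subset_leq_card sub)) // cardsU1.
by rewrite leq_add ?leq_b1 ?leq_imset_card.
Qed.

Lemma card_bigcup_le (I T : finType) (P : {pred I}) (F : I -> {set T}) :
  #|\bigcup_(i in P) F i| <= \sum_(i in P) #|F i|.
Proof.
elim/big_rec2: _ => [|i n U _ IH]; first by rewrite cards0.
by rewrite (leq_trans (leq_of_leqif (leq_card_setU _ _))) // leq_add2l.
Qed.

Lemma card_bigcup_leK (I T : finType) (P : {set I}) (F : I -> {set T}) K :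
  (forall i, #|F i| <= K) -> #|\bigcup_(i in P) F i| <= #|P| * K.
Proof.
move=> H; apply: leq_trans (card_bigcup_le _ _) _.
rewrite -sum_nat_const; exact: leq_sum.
Qed.

Lemma connect_restrict (T : finType) (e : rel T) (A : {set T}) x y :
  (forall u v, e u v -> u \in A -> v \in A) -> x \in A -> connect e x y ->
  connect [rel u v | [&& e u v, u \in A & v \in A]] x y.
Proof.
move=> cl xA /connectP [s ps ->]; elim: s x xA ps => [|z s IH] x xA /=; first by rewrite connect0.
case/andP => exz pzs; have zA := cl _ _ exz xA.
apply: connect_trans (IH _ zA pzs); apply: connect1; by rewrite /= exz xA zA.
Qed.

Lemma connect_const (T : finType) (e : rel T) (T' : eqType) (f : T -> T') x y :
  (forall u v, e u v -> f u = f v) -> connect e x y -> f x = f y.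
Proof.
move=> H /connectP [s ps ->]; elim: s x ps => //= z s IH x /andP [exz pzs].
by rewrite (H _ _ exz) (IH _ pzs).
Qed.

Lemma arith (a z s k : nat) : z * (2*a*(k+1)) <= 4*a*a*(k+1) ->
  s <= z + z*k + (2*a*(k+1)).-1 -> 0 < a -> a * s.+1 <= 4*a*a*(k+1).
Proof.
move=> H1 H2 a0.
have e1 : s.+1 <= z*(k+1) + 2*a*(k+1).
  have : 0 < 2*a*(k+1) by rewrite !muln_gt0 a0 addn1.
  move: H2; set q := 2*a*(k+1); rewrite mulnDr muln1. lia.
have e2 : a * s.+1 <= a*(z*(k+1)) + a*(2*a*(k+1)) by rewrite -mulnDr leq_mul2l e1 orbT.
have e3 : 2 * (a*(z*(k+1))) = z * (2*a*(k+1)) by lia.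
move: e2 e3 H1; set u := a*(z*(k+1)); set v := z * (2*a*(k+1)).
have -> : a * (2 * a * (k + 1)) = 2*a*a*(k+1) by rewrite mulnCA !mulnA.
set w := a*a*(k+1). rewrite -!mulnA -/w.
lia.
Qed.

Section Rooted.
Variables (N : finType) (r : N) (p : N -> N) (d : N -> nat).
Hypothesis pr : p r = r.
Hypothesis dr : d r = 0.
Hypothesis dp : forall x, x != r -> d x = (d (p x)).+1.

Lemma d0 x : (d x == 0) = (x == r).
Proof.
case: (eqVneq x r) => [->|xr]; first by rewrite dr.
by rewrite (dp xr).
Qed.

Lemma dpE x : d (p x) = (d x).-1.
Proof. by case: (eqVneq x r) => [->|/dp ->]; rewrite ?pr ?dr. Qed.

Lemma pneq x : x != r -> p x != x.
Proof. move=> /dp H; apply/eqP=> E; move: H; rewrite E; lia. Qed.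

Definition anc a y := exists i, iter i p y = a.

Lemma d_iter i y : d (iter i p y) = d y - i.
Proof. elim: i => [|i IH] /=; first by rewrite subn0. by rewrite dpE IH; lia. Qed.

Lemma iter_r i y : d y <= i -> iter i p y = r.
Proof. by move=> H; apply/eqP; rewrite -d0 d_iter; lia. Qed.

Lemma anc_refl y : anc y y. Proof. by exists 0. Qed.
Lemma anc_p y : anc (p y) y. Proof. by exists 1. Qed.
Lemma anc_r y : anc r y. Proof. by exists (d y); rewrite iter_r. Qed.
Lemma anc_trans a b c : anc a b -> anc b c -> anc a c.
Proof. by move=> [i <-] [j <-]; exists (i + j); rewrite iterD. Qed.
Lemma anc_d a y : anc a y -> d a <= d y.
Proof. by move=> [i <-]; rewrite d_iter leq_subr. Qed.
Lemma anc_eq a y : anc a y -> d y <= d a -> a = y.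
Proof.
move=> [i <-]; rewrite d_iter => H.
have [->|] := eqVneq i 0; first by [].
move=> i0; case: (eqVneq y r) => [yr|yr].
  by rewrite yr iter_r // dr.
by move: H; rewrite (dp yr); lia.
Qed.
Lemma anc_up z y : anc z y -> z != y -> anc z (p y).
Proof.
move=> [[|i] <-] /=; first by rewrite eqxx.
by move=> _; exists i; rewrite -iterSr.
Qed.
Lemma anc_lt a y : anc a y -> a != y -> d a < d y.
Proof.
move=> H ne; rewrite ltnNge; apply/negP=> H2.
by move: ne; rewrite (anc_eq H H2) eqxx.
Qed.

Definition ancb a y := [exists i : 'I_(d y).+1, iter i p y == a].
Lemma ancP a y : reflect (anc a y) (ancb a y).
Proof.
apply: (iffP existsP) => [[i /eqP <-]|[i <-]]; first by exists i.
case: (leqP i (d y)) => H.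
  by exists (Ordinal (n:=(d y).+1) (m:=i) H).
exists ord_max => /=; rewrite !iter_r //; exact: ltnW.
Qed.

Fixpoint climb (S : {set N}) (m : nat) (x : N) : N :=
  if m is m'.+1 then (if p x \in S then x else climb S m' (p x)) else x.
Definition top S x := climb S (d x) x.

Lemma topE (S : {set N}) x : top S x = if (x == r) || (p x \in S) then x else top S (p x).
Proof.
rewrite /top; case: (eqVneq x r) => [->|xr]; first by rewrite dr.
by rewrite (dp xr) /=.
Qed.

Lemma dep_ind (P : N -> Prop) :
  (forall x, (forall y, d y < d x -> P y) -> P x) -> forall x, P x.
Proof.
move=> H x; have [m] := ubnP (d x); elim: m x => // m IH x Hx.
apply: H => y Hy; apply: IH; lia.
Qed.

Lemma top_anc (S : {set N}) x : anc (top S x) x.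
Proof.
elim/dep_ind: x => x IH; rewrite topE.
case: ifP => [_|/norP [xr _]]; first exact: anc_refl.
apply: anc_trans (IH _ _) (anc_p _); rewrite (dp xr); lia.
Qed.

Lemma top_stop (S : {set N}) x : (top S x == r) || (p (top S x) \in S).
Proof.
elim/dep_ind: x => x IH; rewrite topE.
case: ifP => [//|/norP [xr _]].
apply: IH; rewrite (dp xr); lia.
Qed.

Lemma top_sub (A B : {set N}) x : A \subset B -> top A x = top A (top B x).
Proof.
move=> AB; elim/dep_ind: x => x IH.
rewrite [top B x]topE; case: ifP => [//|/norP [xr pB]].
rewrite -IH; last by rewrite (dp xr).
rewrite topE (negbTE xr) /=.
by have -> : (p x \in A) = false by apply/negP=> /(subsetP AB); apply/negP.
Qed.

Lemma top_below (S : {set N}) z y : z \in S -> anc z y -> y \notin S ->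
  anc z (top S y) /\ d z < d (top S y).
Proof.
move=> zS; elim/dep_ind: y => y IH azy yS.
have zy : z != y by apply: contraNneq yS => <-.
have dzy := anc_lt azy zy.
have yr : y != r by rewrite -d0; lia.
rewrite topE (negbTE yr) /=; case: ifP => pS; first by [].
apply: IH; first by rewrite (dp yr).
  exact: anc_up.
by rewrite pS.
Qed.

Lemma top_notanc (Z : {set N}) t x : ~ anc t x -> top (t |: Z) x = top Z x.
Proof.
elim/dep_ind: x => x IH nA.
rewrite [LHS]topE [RHS]topE; case: (eqVneq x r) => [//|xr] /=.
rewrite in_setU1; have -> : (p x == t) = false.
  by apply/negP=> /eqP E; apply: nA; rewrite -E; exact: anc_p.
case: (p x \in Z) => //=; apply: IH; first by rewrite (dp xr).
by move=> H; apply: nA; exact: anc_trans H (anc_p _).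
Qed.

Lemma top_self (S : {set N}) x : x != r -> p x \in S -> top S x = x.
Proof. by move=> xr pS; rewrite topE pS orbT. Qed.

Lemma top_step (S : {set N}) x : x != r -> p x \notin S -> top S x = top S (p x).
Proof. by move=> xr pS; rewrite topE (negbTE xr) (negbTE pS). Qed.

Lemma factA (Z : {set N}) x y : x \notin Z -> y \notin Z ->
  (forall z, z \in Z -> top [set z] x = top [set z] y) -> top Z x = top Z y.
Proof.
have [m] := ubnP (d x + d y); elim: m x y => // m IH x y Hm.
wlog le : x y Hm / d y <= d x.
  move=> W xZ yZ H; case: (leqP (d y) (d x)) => [l|/ltnW l]; first exact: W.
  symmetry; apply: W => //; first by lia.
  by move=> z /H ->.
move=> xZ yZ H.
case: (eqVneq x y) => [->//|xy].
have xr : x != r.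
  apply: contraNneq xy => xr; move: le; rewrite xr dr leqn0 d0 => /eqP ->//.
case: (boolP (p x \in Z)) => pZ.
  have := H _ pZ; rewrite top_self ?inE // => E.
  have := top_anc [set p x] y; rewrite -E => A.
  by move: xy; rewrite (anc_eq A le) eqxx.
rewrite top_step //; apply: IH => //; first by rewrite (dp xr) in Hm; lia.
move=> z zZ; rewrite -H //.
rewrite [top _ x]top_step // inE; apply: contraNneq pZ => ->//.
Qed.

Lemma top_notin (S : {set N}) x : x \notin S -> top S x \notin S.
Proof.
elim/dep_ind: x => x IH xS; rewrite topE; case: ifP => // /norP [xr pS].
by apply: IH; rewrite ?(dp xr).
Qed.

Lemma separator (A : {set N}) m :
  exists Z : {set N}, #|Z| * m.+1 <= #|A| /\
    forall x, x \notin Z -> #|[set y in A | (y \notin Z) && (top Z y == top Z x)]| <= m.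
Proof.
have [n] := ubnP #|A|; elim: n A => // n IH A HA.
case: (leqP #|A| m) => Am.
  exists set0; rewrite cards0 mul0n; split => // x _.
  apply: leq_trans Am; apply: subset_leq_card; apply/subsetP => y; rewrite inE; case/andP=>//.
pose P t := m < #|[set y in A | ancb t y]|.
have Pr : P r.
  rewrite /P; have -> : [set y in A | ancb r y] = A.
    by apply/setP => y; rewrite inE andb_idr // => _; apply/ancP; exact: anc_r.
  exact: Am.
case: (@arg_maxnP _ r P d Pr) => t Pt tmax.
pose A' := [set y in A | ~~ ancb t y].
have cardA : #|A'| + #|[set y in A | ancb t y]| = #|A|.
  rewrite addnC -(cardsID [set y | ancb t y] A); congr (_ + _); apply: eq_card => y;
  by rewrite !inE andbC.
have [Z' [cZ' hZ']] : exists Z' : {set N}, #|Z'| * m.+1 <= #|A'| /\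
    forall x, x \notin Z' -> #|[set y in A' | (y \notin Z') && (top Z' y == top Z' x)]| <= m.
  apply: IH; move: Pt; rewrite /P; lia.
exists (t |: Z'); split.
  rewrite cardsU1; move: Pt; rewrite /P; case: (t \notin Z') => /=; nia.
move=> x; rewrite in_setU1 negb_or => /andP [xt xZ'].
case: (boolP (ancb t x)) => /ancP atx.
  pose c := top [set t] x.
  have [atc dtc] := @top_below [set t] t x (set11 t) atx ltac:(by rewrite inE).
  have cr : c != r by rewrite -d0; rewrite /c; lia.
  have pc : p c = t.
    have := top_stop [set t] x; rewrite (negbTE cr) /= inE => /eqP//.
  have nPc : ~~ P c.
    apply/negP => Pc; have := tmax c Pc; rewrite (dp cr) pc; lia.
  apply: leq_trans (_ : #|[set y in A | ancb c y]| <= m); last by rewrite leqNgt.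
  apply: subset_leq_card; apply/subsetP => y; rewrite !inE => /andP [yA /andP [yZ /eqP E]].
  rewrite yA /=; apply/ancP; apply: anc_trans (top_anc (t |: Z') y).
  rewrite E /c (@top_sub [set t] (t |: Z') x); last by rewrite sub1set setU11.
  exact: top_anc.
have Ex : top (t |: Z') x = top Z' x by apply: top_notanc.
apply: leq_trans (hZ' x xZ'); apply: subset_leq_card; apply/subsetP => y.
rewrite !inE negb_or => /andP [yA /andP [/andP [yt yZ] /eqP E]].
have nty : ~ anc t y.
  move=> aty; have [] := @top_below (t |: Z') t y (setU11 _ _) aty.
    by rewrite in_setU1 negb_or yt.
  by rewrite E => /anc_trans/(_ (top_anc _ x)).
have Ey : top (t |: Z') y = top Z' y by apply: top_notanc.
rewrite yA yZ /= -Ey E Ex eqxx andbT; apply/ancP => //.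
Qed.

Variables (h : rel N) (K : nat).
Hypothesis hsym : symmetric h.

Definition J (z : N) : {set N} :=
  [set x | (x != z) && [exists y, [&& y != z, h x y & top [set z] x != top [set z] y]]].

Hypothesis HJ : forall z, #|J z| <= K.

Lemma factA' (Z : {set N}) x y : x \notin Z -> y \notin Z -> h x y -> top Z x != top Z y ->
  x \in \bigcup_(z in Z) J z.
Proof.
move=> xZ yZ hxy ne.
case: (boolP [exists z in Z, top [set z] x != top [set z] y]).
  case/existsP => z /andP [zZ nz]; apply/bigcupP; exists z => //.
  rewrite inE; apply/andP; split; first by apply/eqP => E; move: xZ; rewrite E zZ.
  apply/existsP; exists y; apply/and3P; split => //; apply/eqP => E; move: yZ; rewrite E zZ.
  done.
move=> nE.
have H : forall z, z \in Z -> top [set z] x = top [set z] y.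
  move=> z zZ; apply/eqP; apply: contraNT nE => nz; apply/existsP; exists z; rewrite zZ nz.
  done.
by move: ne; rewrite (factA xZ yZ H) eqxx.
Qed.

Lemma bigJ (Z : {set N}) : #|\bigcup_(z in Z) J z| <= #|Z| * K.
Proof. exact: card_bigcup_leK. Qed.

Lemma nbound (S C : {set N}) :
  [disjoint C & S] ->
  (forall x y, x \in C -> y \in C -> connect [rel u v | [&& h u v, u \in C & v \in C]] x y) ->
  #|[set y in C | [exists x in S, h x y]]| <=
    #|S| + (1 + #|S| * K) + (#|S| + #|S| + (1 + #|S| * K)) * K.
Proof.
move=> dCS Hc.
set P := p @: S; set Tops := top S @: C.
have hT : #|Tops| <= 1 + #|S| * K.
  apply: leq_trans (classes_bound (top S) Hc) _; rewrite leq_add2l.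
  apply: leq_trans (bigJ S); apply: subset_leq_card; apply/subsetP => x.
  rewrite inE => /andP [xC /existsP [y /and3P [yC hyx ne]]].
  apply: (@factA' S x y); first by rewrite (disjointFr dCS xC).
  - by rewrite (disjointFr dCS yC).
  - by rewrite hsym.
  - by rewrite eq_sym.
have hP : #|P| <= #|S| by apply: leq_imset_card.
have sub : [set y in C | [exists x in S, h x y]] \subset
           (P :|: Tops) :|: \bigcup_(w in (S :|: P) :|: Tops) J w.
  apply/subsetP => y; rewrite inE => /andP [yC /existsP [x /andP [xS hxy]]].
  have yS : y \notin S by rewrite (disjointFr dCS yC).
  rewrite !in_setU.
  case: (eqVneq y (p x)) => [->|ypx]; first by rewrite imset_f.
  case: (boolP ((y != r) && (x == p y))) => [/andP [yr /eqP xpy]|nB].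
    apply/orP; left; apply/orP; right; apply/imsetP; exists y => //.
    by rewrite top_self // -xpy.
  apply/orP; right; apply/bigcupP.
  case: (boolP (ancb x y)) => /ancP axy; last first.
    have xr : x != r by apply/eqP => E; apply: axy; rewrite E; exact: anc_r.
    exists (p x); first by rewrite !in_setU imset_f ?orbT.
    rewrite inE ypx /=; apply/existsP; exists x.
    apply/and3P; split; [by rewrite eq_sym pneq | by rewrite hsym | ].
    rewrite (top_self xr) ?inE //.
    by apply/eqP => E; apply: axy; rewrite -E; exact: top_anc.
  have xy : x != y by apply: contraNneq yS => <-.
  have [axb dxb] := top_below xS axy yS.
  have br : top S y != r by rewrite -d0 -lt0n; exact: leq_ltn_trans (leq0n _) dxb.
  have pbS : p (top S y) \in S by have := top_stop S y; rewrite (negbTE br).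
  set b := top S y in axb dxb br pbS *.
  case: (eqVneq (p b) x) => [pbx|pbx].
    have yb : y != b.
      apply: contraNneq nB => yb; rewrite yb br /= -pbx eqxx //.
    exists b; first by rewrite !in_setU imset_f ?orbT.
    rewrite inE yb /=; apply/existsP; exists x.
    have xb : x != b by apply/eqP => E; move: dxb; rewrite E ltnn.
    rewrite xb hsym hxy /=.
    have [_ d1] := @top_below [set b] b y (set11 b) (top_anc S y) ltac:(by rewrite inE).
    have d2 := anc_d (top_anc [set b] x).
    by apply/eqP => E; move: d1; rewrite E => d1; have := ltn_trans d1 (leq_ltn_trans d2 dxb); rewrite ltnn.
  exists (p b); first by rewrite !in_setU pbS.
  have ypb : y != p b by apply: contraNneq yS => ->.
  rewrite inE ypb /=; apply/existsP; exists x; rewrite eq_sym pbx hsym hxy /=.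
  rewrite (@top_sub [set p b] S y); last by rewrite sub1set.
  rewrite -/b (top_self br) ?inE //.
  have d2 := anc_d (top_anc [set p b] x).
  by apply/eqP => E; move: d2; rewrite -E leqNgt dxb.
apply: leq_trans (subset_leq_card sub) _.
apply: leq_trans (leq_of_leqif (leq_card_setU _ _)) _.
apply: leq_add.
  apply: leq_trans (leq_of_leqif (leq_card_setU _ _)) _; exact: leq_add.
apply: leq_trans (card_bigcup_leK _ HJ) _; apply: leq_mul => //.
apply: leq_trans (leq_of_leqif (leq_card_setU _ _)) _; apply: leq_add => //.
apply: leq_trans (leq_of_leqif (leq_card_setU _ _)) _; exact: leq_add.
Qed.

Definition al := (K + 2) * (K + 2).
Definition m0 := (2 * al * (K + 1)).-1.
Definition B := 4 * al * al * (K + 1).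
Definition M := 2 * B.

Lemma m0S : m0.+1 = 2 * al * (K + 1).
Proof. rewrite /m0 /al; lia. Qed.

Lemma phi_le s : s + (1 + s * K) + (s + s + (1 + s * K)) * K <= al * s.+1.
Proof. rewrite /al; nia. Qed.

Record TP (W R : {set N}) (f par : N -> N) (rk : N -> nat) (rho : N) : Prop := {
  tp1 : forall x, x \in W -> f x \in W /\ f (f x) = f x;
  tp2 : W != set0 -> rho \in W /\ f rho = rho;
  tp3 : forall x, x \in R -> f x = rho;
  tp4 : forall y, y \in W -> f y = y -> y != rho ->
        [/\ par y \in W, f (par y) = par y & rk (par y) < rk y];
  tp5 : forall x y, x \in W -> y \in W -> h x y ->
        f x = f y \/ (f x != rho /\ par (f x) = f y) \/ (f y != rho /\ par (f y) = f x);
  tp6 : forall v, #|[set x in W | f x == v]| <= M }.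

Lemma wood (W R : {set N}) : R \subset W -> #|R| <= B ->
  exists f par rk rho, TP W R f par rk rho.
Proof.
have [n] := ubnP #|W|; elim: n W R => // n IH W R HW RW RB.
case: (set_0Vmem W) => [W0|[w0 w0W]].
  exists id, id, (fun _ => 0), r; subst W; split.
  - by move=> x; rewrite inE.
  - by rewrite eqxx.
  - by move=> x /(subsetP RW); rewrite inE.
  - by move=> y; rewrite inE.
  - by move=> x y; rewrite inE.
  - move=> v; rewrite (_ : [set x in set0 | _] = set0) ?cards0 //.
    by apply/setP=> x; rewrite !inE.
have B1 : 1 <= B by rewrite /B /al; nia.
pose R' := if R == set0 then [set w0] else R.
have RR' : R \subset R'.
  by rewrite /R'; case: eqP => [->|]; rewrite ?sub0set.
have R'W : R' \subset W by rewrite /R'; case: eqP => _ //; rewrite sub1set.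
have R'B : #|R'| <= B by rewrite /R'; case: eqP => _ //; rewrite cards1.
have R'0 : exists r0, r0 \in R'.
  rewrite /R'; case: eqP => [_|/eqP]; first by exists w0; rewrite set11.
  by case/set0Pn => r0; exists r0.
have [Z [cZ hZ]] := separator R' m0.
pose X' := Z :|: \bigcup_(z in Z) J z.
have X'E x : (x \in X') = (x \in Z) || (x \in \bigcup_(z in Z) J z) by rewrite in_setU.
have cX' : #|X'| <= #|Z| + #|Z| * K.
  apply: leq_trans (leq_of_leqif (leq_card_setU _ _)) _; rewrite leq_add2l; exact: bigJ.
clearbody X'.
pose bag := R' :|: (X' :&: W).
have bagE x : (x \in bag) = (x \in R') || (x \in X') && (x \in W) by rewrite in_setU in_setI.
have cbag : #|bag| <= #|R'| + #|X'|.
  apply: leq_trans (leq_of_leqif (leq_card_setU _ _)) _; rewrite leq_add2l.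
  by apply: subset_leq_card; apply: subsetIl.
clearbody bag.
pose U := W :\: bag.
have UE x : (x \in U) = (x \notin bag) && (x \in W) by rewrite in_setD.
clearbody U.
pose hU := [rel x y | [&& h x y, x \in U & y \in U]].
pose comp x := [set y in U | connect hU x y].
have compE x y : (y \in comp x) = (y \in U) && connect hU x y by rewrite inE.
clearbody comp.
pose Rc (C : {set N}) := [set y in C | [exists b in bag, h b y]].
have hUsym : symmetric hU.
  by move=> x y /=; rewrite hsym; case: (x \in U); case: (y \in U); rewrite ?andbF.
have UW : U \subset W by apply/subsetP => x; rewrite UE => /andP [].
have Ubag x : x \in U -> x \notin bag by rewrite UE => /andP [].
have compU x : comp x \subset U by apply/subsetP => y; rewrite compE => /andP [].
have comp_self x : x \in U -> x \in comp x by move=> xU; rewrite compE xU connect0.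
have comp_eq x y : x \in U -> y \in comp x -> comp y = comp x.
  move=> xU; rewrite compE => /andP [yU cxy]; apply/setP => z; rewrite !compE.
  case: (z \in U) => //=; apply/idP/idP => [cyz|cxz].
    exact: connect_trans cxy cyz.
  by apply: connect_trans cxz; rewrite (sym_connect_sym hUsym).
have comp_conn x : x \in U -> forall y y', y \in comp x -> y' \in comp x ->
    connect [rel u v | [&& h u v, u \in comp x & v \in comp x]] y y'.
  move=> xU y y' yC y'C.
  have H : connect hU y y'.
    move: yC y'C; rewrite !compE => /andP [_ cxy] /andP [_ cxy'].
    by apply: connect_trans cxy'; rewrite (sym_connect_sym hUsym).
  have E : [rel u v | [&& hU u v, u \in comp x & v \in comp x]] =2
            [rel u v | [&& h u v, u \in comp x & v \in comp x]].
    move=> u v /=; case: (boolP (u \in comp x)) => uC; case: (boolP (v \in comp x)) => vC;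
    rewrite ?andbF ?andbT //=.
    by rewrite (subsetP (compU x) _ uC) (subsetP (compU x) _ vC) !andbT.
  rewrite -(eq_connect E); apply: (connect_restrict _ yC H).
  move=> u v huv uC; rewrite compE; have /and3P [_ _ vU] := huv; rewrite vU /=.
  move: uC; rewrite compE => /andP [_ cxu]; apply: connect_trans cxu _.
  by apply: connect1.
have Rc_small x : x \in U -> #|Rc (comp x)| <= B.
  move=> xU.
  have inU y : y \in comp x -> y \in U by move=> /(subsetP (compU x)).
  have notX y : y \in U -> y \notin X'.
    move=> yU; apply/negP => yX; move: (Ubag _ yU); rewrite bagE yX.
    by rewrite (subsetP UW _ yU) orbT.
  have notZ y : y \in U -> y \notin Z.
    by move=> /notX; rewrite X'E negb_or => /andP [].
  have topc y : y \in comp x -> top Z y = top Z x.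
    rewrite compE => /andP [_ cxy]; symmetry; apply: (connect_const (e := hU)) cxy.
    move=> u v /and3P [huv uU vU]; apply/eqP; apply: contraNT (notX _ uU) => ne.
    by rewrite X'E (factA' (notZ _ uU) (notZ _ vU) huv ne) orbT.
  pose S' := X' :|: [set y in R' | (y \notin Z) && (top Z y == top Z x)].
  have sub : Rc (comp x) \subset [set y in comp x | [exists s in S', h s y]].
    apply/subsetP => y; rewrite !inE => /andP [yC /existsP [b /andP [bbag hby]]].
    rewrite yC /=; apply/existsP; exists b; rewrite hby andbT in_setU.
    case: (boolP (b \in X')) => //= bX.
    have bR : b \in R'.
      by move: bbag; rewrite bagE (negbTE bX) /= orbF.
    rewrite inE bR /=.
    have bZ : b \notin Z by move: bX; rewrite X'E negb_or => /andP [].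
    rewrite bZ /= -(topc y yC); apply: contraNT bX => ne.
    by rewrite X'E (factA' bZ (notZ _ (inU _ yC)) hby ne) orbT.
  have dis : [disjoint comp x & S'].
    apply/pred0P => y /=; apply/negP => /andP [yC]; rewrite in_setU => /orP [yX|]; first by move: (notX _ (inU _ yC)); rewrite yX.
    rewrite inE => /andP [yR _]; move: (Ubag _ (inU _ yC)); rewrite bagE yR.
    done.
  have cS' : #|S'| <= #|Z| + #|Z| * K + m0.
    apply: leq_trans (leq_of_leqif (leq_card_setU _ _)) _.
    apply: leq_add; last by apply: hZ; exact: notZ.
    exact: cX'.
  apply: leq_trans (subset_leq_card sub) _.
  apply: leq_trans (nbound dis (comp_conn x xU)) _.
  apply: leq_trans (phi_le _) _.
  have cZ' : #|Z| * m0.+1 <= B by exact: leq_trans cZ R'B.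
  rewrite /B; apply: (@arith al #|Z|); [by rewrite -m0S | exact: cS' | by rewrite /al muln_gt0 addn2].
have comp_small x : x \in U -> #|comp x| < n.
  move=> xU; rewrite -ltnS; apply: leq_trans HW; rewrite ltnS.
  apply: proper_card; apply/properP; split.
    exact: subset_trans (compU x) UW.
  case: R'0 => r0 r0R; exists r0; first exact: (subsetP R'W).
  by apply/negP => /(subsetP (compU x)) /Ubag; rewrite bagE r0R.
have Hch : forall C : {set N}, exists D : (N -> N) * (N -> N) * (N -> nat) * N,
    (exists2 x, x \in U & C = comp x) -> TP C (Rc C) D.1.1.1 D.1.1.2 D.1.2 D.2.
  move=> C; case: (boolP [exists x in U, C == comp x]) => [/existsP [x /andP [xU /eqP CE]]|nE].
    have [f [par [rk [rho Htp]]]] : exists f par rk rho, TP C (Rc C) f par rk rho.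
      apply: IH.
      - by rewrite CE; exact: comp_small.
      - by apply/subsetP => y; rewrite inE => /andP [].
      - by rewrite CE; exact: Rc_small.
    by exists (f, par, rk, rho).
  exists (id, id, fun _ => 0, r) => -[x xU CE]; case/negP: nE.
  by apply/existsP; exists x; rewrite xU CE eqxx.
case: (boolp.choice Hch) => G HG.
pose F y := G (comp y).
have HF y : y \in U -> TP (comp y) (Rc (comp y)) (F y).1.1.1 (F y).1.1.2 (F y).1.2 (F y).2.
  by move=> yU; apply: HG; exists y.
have Fe y y' : y \in U -> y' \in comp y -> F y' = F y.
  by move=> yU y'C; rewrite /F (comp_eq _ _ yU y'C).
case: R'0 => rho rhoR.
have rhob : rho \in bag by rewrite bagE rhoR.
have rhoU : rho \notin U by apply/negP => /Ubag; rewrite rhob.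
have rhoW : rho \in W by exact: (subsetP R'W).
pose f y := if y \in U then (F y).1.1.1 y else rho.
pose par y := if y \in U then (if y == (F y).2 then rho else (F y).1.1.2 y) else rho.
pose rk y := if y \in U then ((F y).1.2 y).+1 else 0.
have fC y : y \in U -> (F y).1.1.1 y \in comp y.
  by move=> yU; have [/(_ y (comp_self y yU)) []] := HF y yU.
have rhoC y : y \in U -> (F y).2 \in comp y.
  move=> yU; have [_ H2 _ _ _ _] := HF y yU.
  have [] // := H2; apply/set0Pn; exists y; exact: comp_self.
have fU y : y \in U -> f y = (F y).1.1.1 y by rewrite /f => ->.
have fnU y : y \notin U -> f y = rho by rewrite /f => /negbTE ->.
exists f, par, rk, rho; split.
- move=> x xW; case: (boolP (x \in U)) => xU; last by rewrite !fnU.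
  have fxC := fC x xU; have fxU : (F x).1.1.1 x \in U by exact: (subsetP (compU x)).
  rewrite fU //; split; first exact: (subsetP UW).
  rewrite fU // (Fe x _ xU fxC).
  by have [/(_ x (comp_self x xU)) []] := HF x xU.
- by move=> _; rewrite fnU.
- by move=> x /(subsetP RR') xR; rewrite fnU //; apply/negP => /Ubag; rewrite bagE xR.
- move=> y yW fy yrho; case: (boolP (y \in U)) => yU; last by move: fy yrho; rewrite fnU // => ->; rewrite eqxx.
  have [_ _ _ H4 _ _] := HF y yU.
  rewrite /par /rk yU; case: (eqVneq y (F y).2) => [_|yr].
    by split => //; [exact: fnU | rewrite (negbTE rhoU)].
  have fy' : (F y).1.1.1 y = y by rewrite -fU.
  have [pC fp rkp] := H4 y (comp_self y yU) fy' yr.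
  have pU : (F y).1.1.2 y \in U by exact: (subsetP (compU y)).
  rewrite (subsetP UW _ pU) pU (Fe y _ yU pC) fU // (Fe y _ yU pC); split => //.
- move=> x y xW yW hxy.
  case: (boolP (x \in U)) => xU; case: (boolP (y \in U)) => yU.
  + have yC : y \in comp x by rewrite compE yU; apply: connect1; rewrite /= hxy xU yU.
    have [_ _ _ _ H5 _] := HF x xU.
    rewrite !fU // (Fe x y xU yC).
    have fxU : (F x).1.1.1 x \in U by exact: (subsetP (compU x) _ (fC x xU)).
    have fyU : (F x).1.1.1 y \in U.
      by rewrite -(Fe x y xU yC); exact: (subsetP (compU y) _ (fC y yU)).
    have Ex : F ((F x).1.1.1 x) = F x by apply: (Fe) => //; exact: fC.
    have Ey : F ((F x).1.1.1 y) = F x.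
      apply: (Fe) => //; rewrite -(comp_eq _ _ xU yC) -{1}(Fe x y xU yC); exact: fC.
    case: (H5 x y (comp_self x xU) yC hxy) => [->|[[ne pe]|[ne pe]]]; [by left|right; left|right; right].
      by rewrite /par fxU Ex (negbTE ne); split => //; apply/negP => /eqP E; move: rhoU; rewrite -E fxU.
    by rewrite /par fyU Ey (negbTE ne); split => //; apply/negP => /eqP E; move: rhoU; rewrite -E fyU.
  + have [_ _ H3 _ _ _] := HF x xU.
    have xR : x \in Rc (comp x).
      rewrite inE comp_self //=; apply/existsP; exists y; rewrite hsym hxy andbT.
      by move: yU; rewrite UE yW andbT negbK.
    have fx : f x = (F x).2 by rewrite fU // H3.
    have rU : (F x).2 \in U by exact: (subsetP (compU x) _ (rhoC x xU)).
    right; left; rewrite fx (fnU y yU); split.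
      by apply/negP => /eqP E; move: rhoU; rewrite -E rU.
    by rewrite /par rU (Fe x _ xU (rhoC x xU)) eqxx.
  + have [_ _ H3 _ _ _] := HF y yU.
    have yR : y \in Rc (comp y).
      rewrite inE comp_self //=; apply/existsP; exists x; rewrite hxy andbT.
      by move: xU; rewrite UE xW andbT negbK.
    have fy : f y = (F y).2 by rewrite fU // H3.
    have rU : (F y).2 \in U by exact: (subsetP (compU y) _ (rhoC y yU)).
    right; right; rewrite fy (fnU x xU); split.
      by apply/negP => /eqP E; move: rhoU; rewrite -E rU.
    by rewrite /par rU (Fe y _ yU (rhoC y yU)) eqxx.
  + by left; rewrite !fnU.
- move=> v; case: (eqVneq v rho) => [->|vr].
    apply: leq_trans (_ : #|bag| <= _).
      apply: subset_leq_card; apply/subsetP => x; rewrite inE => /andP [xW /eqP fx].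
      apply: contraT => xb; have xU : x \in U by rewrite UE xb xW.
      by move: rhoU; rewrite -fx fU // (subsetP (compU x) _ (fC x xU)).
    apply: leq_trans cbag _; apply: leq_trans (leq_add R'B cX') _.
    have H1 : #|Z| * m0.+1 <= B by exact: leq_trans cZ R'B.
    have H2 : #|Z| + #|Z| * K <= #|Z| * m0.+1.
      have -> : #|Z| + #|Z| * K = #|Z| * (K + 1) by lia.
      rewrite leq_mul2l m0S; apply/orP; right; apply: leq_pmull.
      by rewrite !muln_gt0 /al addn2.
    rewrite /M; lia.
  case: (set_0Vmem [set x in W | f x == v]) => [->|[x0]]; first by rewrite cards0.
  rewrite inE => /andP [x0W /eqP fx0].
  have x0U : x0 \in U by apply: contraT => /fnU E; move: vr; rewrite -fx0 E eqxx.
  have [_ _ _ _ _ H6] := HF x0 x0U.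
  apply: leq_trans (H6 v); apply: subset_leq_card; apply/subsetP => x.
  rewrite !inE => /andP [xW /eqP fx].
  have xU : x \in U by apply: contraT => /fnU E; move: vr; rewrite -fx E eqxx.
  have vx : v \in comp x by rewrite -fx fU //; exact: fC.
  have vx0 : v \in comp x0 by rewrite -fx0 fU //; exact: fC.
  have xx0 : x \in comp x0.
    by rewrite -(comp_eq _ _ x0U vx0) (comp_eq _ _ xU vx); exact: comp_self.
  by rewrite xx0 -(Fe x0 x x0U xx0) -fU // fx eqxx.
Qed.

Lemma pres_edge z x y : x != z -> y != z ->
  ((x != r) && (p x == y)) || ((y != r) && (p y == x)) -> top [set z] x = top [set z] y.
Proof.
move=> xz yz /orP [/andP [xr /eqP pxy]|/andP [yr /eqP pyx]].
  by rewrite (top_step xr) pxy // inE.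
by rewrite [RHS](top_step yr) pyx // inE.
Qed.

End Rooted.


Definition prel (n : nat) (rho : 'I_n) (q : 'I_n -> 'I_n) : rel 'I_n :=
  fun x y => ((x != rho) && (q x == y)) || ((y != rho) && (q y == x)).

Lemma count_parent (n : nat) (rho : 'I_n) (q : 'I_n -> 'I_n) (rk : 'I_n -> nat) :
  (forall y, y != rho -> rk (q y) < rk y) ->
  #|[set pr : 'I_n * 'I_n | prel rho q pr.1 pr.2]| = 2 * (n - 1).
Proof.
move=> Hrk.
pose Im := [set (x, q x) | x in [set~ rho]].
pose Im' := [set (q x, x) | x in [set~ rho]].
have -> : [set pr : 'I_n * 'I_n | prel rho q pr.1 pr.2] = Im :|: Im'.
  apply/setP => -[x y]; rewrite !inE /prel /=.
  apply/orP/orP => [[/andP [xr /eqP <-]|/andP [yr /eqP <-]]|[/imsetP [z zr [-> ->]]|/imsetP [z zr [-> ->]]]].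
  - by left; apply/imsetP; exists x; rewrite ?inE.
  - by right; apply/imsetP; exists y; rewrite ?inE.
  - by left; move: zr; rewrite !inE => ->; rewrite eqxx.
  - by right; move: zr; rewrite !inE => ->; rewrite eqxx.
have cI : #|Im| = n - 1.
  rewrite card_imset; last by move=> u v [].
  by rewrite cardsC1 card_ord subn1.
have cI' : #|Im'| = n - 1.
  rewrite card_imset; last by move=> u v [].
  by rewrite cardsC1 card_ord subn1.
have dis : Im :&: Im' = set0.
  apply/setP => -[x y]; rewrite !inE; apply/negP => /andP [/imsetP [u ur [-> ->]] /imsetP [v vr [E1 E2]]].
  move: ur vr; rewrite !inE => ur vr.
  have h1 := Hrk _ ur; have h2 := Hrk _ vr.
  by move: h1 h2; rewrite -E1 E2; move=> h1 h2; have := ltn_trans h1 h2; rewrite ltnn.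
by rewrite cardsU dis cards0 subn0 cI cI' addnn mul2n.
Qed.

Lemma ptree (n : nat) (rho : 'I_n) (q : 'I_n -> 'I_n) (rk : 'I_n -> nat) :
  (forall y, y != rho -> rk (q y) < rk y) -> is_tree (prel rho q).
Proof.
move=> Hrk; have asym : symmetric (prel rho q) by move=> x y; rewrite /prel orbC.
split.
- exact: leq_ltn_trans (leq0n _) (ltn_ord rho).
- exact: asym.
- move=> x; apply/negP; rewrite /prel orbb => /andP [xr /eqP qx].
  by have := Hrk x xr; rewrite qx ltnn.
- have cr x : connect (prel rho q) x rho.
    have [m] := ubnP (rk x); elim: m x => // m IH x Hx.
    case: (eqVneq x rho) => [->|xr]; first exact: connect0.
    apply: connect_trans (connect1 _) (IH (q x) _); first by rewrite /prel xr eqxx.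
    by have := Hrk x xr; lia.
  move=> s t; apply: connect_trans (cr s) _; rewrite (sym_connect_sym asym); exact: cr.
- exact: count_parent Hrk.
Qed.


Lemma tree_struct (n : nat) (a : rel 'I_n) : is_tree a ->
  exists (r : 'I_n) (p : 'I_n -> 'I_n) (d : 'I_n -> nat),
    [/\ p r = r, d r = 0, (forall x, x != r -> d x = (d (p x)).+1) &
        forall x y, a x y = prel r p x y].
Proof.
case=> n0 asym airr conn cnt.
pose r := Ordinal n0.
pose P x m := [exists t : m.-tuple 'I_n, path a r t && (last r t == x)].
have mkP x s : path a r s -> last r s = x -> P x (size s).
  by move=> ps ls; apply/existsP; exists (in_tuple s); rewrite ps ls eqxx.
have exP x : exists m, P x m.
  by have /connectP [s ps ls] := conn r x; exists (size s); apply: mkP.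
pose d x := ex_minn (exP x).
have dpath x : exists s, [/\ path a r s, last r s = x & size s = d x].
  rewrite /d; case: ex_minnP => m /existsP [t /andP [pt /eqP lt]] _.
  by exists t; rewrite size_tuple.
have dmin x s : path a r s -> last r s = x -> d x <= size s.
  move=> ps ls; rewrite /d; case: ex_minnP => m _ H; exact: H (mkP _ _ ps ls).
have dr : d r = 0.
  by apply/eqP; rewrite -leqn0; apply: (dmin r [::]).
have dedge x y : a x y -> d y <= (d x).+1.
  move=> axy; have [s [ps ls sz]] := dpath x.
  have := dmin y (rcons s y); rewrite rcons_path ps ls axy last_rcons size_rcons sz.
  by apply.
have dpar x : x != r -> exists y, a y x && ((d y).+1 == d x).
  move=> xr; have [s [ps ls sz]] := dpath x.
  case/lastP: s ps ls sz => [|s' z]; first by move=> _ /= xe; move: xr; rewrite -xe eqxx.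
  rewrite rcons_path last_rcons size_rcons => /andP [ps' ayz] zx sz.
  exists (last r s'); rewrite -zx ayz /=.
  have h1 := dmin _ s' ps' (erefl _).
  have h2 := dedge _ _ ayz.
  move: h1 h2 sz; rewrite zx => h1 h2 sz; apply/eqP; lia.
pose p x := if [pick y | a y x && ((d y).+1 == d x)] is Some y then y else r.
have pspec x : x != r -> a (p x) x /\ (d (p x)).+1 = d x.
  move=> xr; rewrite /p; case: pickP => [y /andP [ayx /eqP e]//|H].
  by have [y] := dpar x xr; rewrite H.
have pr : p r = r.
  rewrite /p; case: pickP => [y /andP [_ /eqP e]|//].
  by move: e; rewrite dr.
have dp x : x != r -> d x = (d (p x)).+1 by move=> /pspec [].
have Hrk y : y != r -> d (p y) < d y by move=> yr; rewrite (dp y yr).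
exists r, p, d; split => //.
have sub : [set pr : 'I_n * 'I_n | prel r p pr.1 pr.2] \subset [set pr : 'I_n * 'I_n | a pr.1 pr.2].
  apply/subsetP => -[x y]; rewrite !inE /prel /=.
  case/orP => /andP [xr /eqP <-].
    by rewrite asym; have [] := pspec _ xr.
  by have [] := pspec _ xr.
have ce : #|[set pr : 'I_n * 'I_n | prel r p pr.1 pr.2]| = #|[set pr : 'I_n * 'I_n | a pr.1 pr.2]|.
  by rewrite cnt (count_parent Hrk).
move=> x y; have := subset_cardP ce sub => /(_ (x, y)); rewrite !inE /= => ->.
done.
Qed.


Definition gfun (k : nat) := M (2 * k) * k.

Lemma main_bound (V : finType) (e : rel V) (k : nat) : symmetric e ->
  ecrw_le e k -> tpw_le e (gfun k).
Proof.
move=> esym [n [a [X [[tr dis cov] w]]]].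
have [r [p [d [pr dr dp ach]]]] := tree_struct tr.
have crk t : cross e a X t <= k.
  apply: leq_trans w; apply: leq_trans (leq_maxl _ _); exact: (leq_bigmax t).
have thk t : #|X t| <= k.
  apply: leq_trans w; apply: leq_trans (leq_maxr _ _); exact: (leq_bigmax t).
pose s v := odflt r [pick t | v \in X t].
have sX v : v \in X (s v).
  rewrite /s; case: pickP => [t //|H]; have [t vt] := cov v; by move: (H t); rewrite vt.
have sU u t : u \in X t -> s u = t.
  move=> ut; apply/eqP; apply: contraT => ne.
  by have := dis _ _ ne => /disjointFr/(_ (sX u)); rewrite ut.
pose h (x y : 'I_n) := (x != y) && [exists u, exists v, [&& e u v, u \in X x & v \in X y]].
have hsym : symmetric h.
  move=> x y; rewrite /h eq_sym; congr (_ && _).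
  apply/existsP/existsP => -[u /existsP [v /and3P [euv ux vy]]]; exists v; apply/existsP; exists u.
    by rewrite esym euv ux vy.
  by rewrite esym euv ux vy.
have HJ z : #|J p d h z| <= 2 * k.
  pose CV := [set u | [exists v, e u v && crosses a X z u v]].
  pose Fam := [set S : {set V} | [exists u : V, exists v : V,
        [&& e u v, S == [set u; v] & crosses a X z u v]]].
  have cF : #|Fam| = cross e a X z by [].
  apply: leq_trans (_ : #|s @: CV| <= _).
    apply: subset_leq_card; apply/subsetP => x; rewrite inE => /andP [xz /existsP [y /and3P [yz hxy tne]]].
    move: hxy; rewrite /h => /andP [xy /existsP [u /existsP [v /and3P [euv ux vy]]]].
    apply/imsetP; exists u; last by rewrite (sU _ _ ux).
    rewrite inE; apply/existsP; exists v; rewrite euv /=.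
    apply/existsP; exists x; apply/existsP; exists y; rewrite ux vy xz yz /=.
    apply/negP => cxy; move/negP: tne; apply; apply/eqP.
    apply: (connect_const (e := del_rel a z)) cxy => u' v' /and3P [auv u'z v'z].
    by apply: (pres_edge dr dp u'z v'z); move: auv; rewrite ach.
  apply: leq_trans (leq_imset_card _ _) _.
  apply: leq_trans (_ : #|\bigcup_(S in Fam) S| <= _).
    apply: subset_leq_card; apply/subsetP => u; rewrite inE => /existsP [v /andP [euv cr]].
    apply/bigcupP; exists [set u; v]; last by rewrite !inE eqxx.
    by rewrite inE; apply/existsP; exists u; apply/existsP; exists v; rewrite euv eqxx cr.
  apply: leq_trans (card_bigcup_le _ _) _.
  apply: leq_trans (_ : \sum_(S in Fam) 2 <= _).
    apply: leq_sum => S; rewrite inE => /existsP [u /existsP [v /and3P [_ /eqP -> _]]].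
    by rewrite cards2; case: (u != v).
  rewrite sum_nat_const cF mulnC leq_mul2l crk orbT //.
have [f [par [rk [rho Htp]]]] := @wood _ _ _ _ pr dr dp h (2 * k) hsym HJ setT set0 (sub0set _) ltac:(by rewrite cards0).
case: Htp => tp1 tp2 tp3 tp4 tp5 tp6.
pose q y := if (f y == y) && (y != rho) then par y else rho.
pose rk' y := if y == rho then 0 else if f y == y then (rk y).+1 else 1.
have Hrk y : y != rho -> rk' (q y) < rk' y.
  move=> yr; rewrite /q /rk' (negbTE yr).
  case: (eqVneq (f y) y) => [fy|fy] /=; last by rewrite eqxx.
  have [_ fp rkp] := tp4 y (in_setT y) fy yr.
  by case: (eqVneq (par y) rho) => [//|_]; rewrite fp eqxx.
pose Y (t : 'I_n) := [set v | f (s v) == t].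
exists n, (prel rho q), Y; split; last first.
  apply/bigmax_leqP => t _.
  apply: leq_trans (_ : #|\bigcup_(x in [set x | f x == t]) X x| <= _).
    apply: subset_leq_card; apply/subsetP => v; rewrite inE => fv.
    by apply/bigcupP; exists (s v); rewrite ?inE.
  apply: leq_trans (card_bigcup_leK _ thk) _; rewrite /gfun leq_mul2r.
  apply/orP; right; apply: leq_trans (tp6 t); apply: subset_leq_card.
  by apply/subsetP => x; rewrite !inE.
split; first split.
- exact: ptree Hrk.
- move=> t1 t2 ne; apply/pred0P => v /=; rewrite !inE; apply/negP => /andP [/eqP E1 /eqP E2].
  by move: ne; rewrite -E1 -E2 eqxx.
- by move=> v; exists (f (s v)); rewrite inE.
move=> u v t1 t2 euv; rewrite !inE => /eqP <- /eqP <-.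
case: (eqVneq (s u) (s v)) => [->|ne]; first by left.
have hs : h (s u) (s v) by rewrite /h ne /=; apply/existsP; exists u; apply/existsP; exists v; rewrite euv !sX.
have fxf x : f (f x) = f x by have [] := tp1 x (in_setT x).
case: (tp5 _ _ (in_setT _) (in_setT _) hs) => [->|[[ne1 pe]|[ne1 pe]]]; [by left|right|right].
  by rewrite /prel /q !fxf !eqxx ne1 /= pe eqxx.
by rewrite /prel /q !fxf !eqxx ne1 /= pe eqxx orbT.
Qed.


Lemma tp_ec (V : finType) (e : rel V) k : tpw_le e k -> ecrw_le e k.
Proof.
move=> [n [a [X [[tcd tp] th]]]]; exists n, a, X; split => //.
rewrite /ec_width geq_max th andbT.
apply/bigmax_leqP => t _; apply: leq_trans (_ : cross e a X t <= 0) (leq0n k).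
rewrite /cross leqn0 cards_eq0; apply/eqP/setP => S; rewrite !inE.
apply/negbTE/negP => /existsP [u /existsP [v /and3P [euv _ cr]]].
move: cr; rewrite /crosses => /existsP [s1 /existsP [s2 /and5P [us vs s1t s2t nc]]].
case: (tp u v s1 s2 euv us vs) => [E|as12]; move/negP: nc; apply.
  by rewrite E connect0.
by apply: connect1; rewrite /del_rel as12 s1t s2t.
Qed.

Theorem lemma3p17 :
  exists g : nat -> nat,
    forall (V : finType) (e : rel V), symmetric e -> irreflexive e ->
      tpw e <= g (ecrw e) /\ ecrw e <= tpw e.
Proof.
exists gfun => V e esym _; split.
  have H : ecrw_le e (ecrw e) by rewrite /ecrw; case: ex_minnP => m /boolp.asboolP.
  have := main_bound esym H => Ht.
  rewrite /tpw; case: ex_minnP => m _ Hmin; apply: Hmin; exact/boolp.asboolP.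
have H : tpw_le e (tpw e) by rewrite /tpw; case: ex_minnP => m /boolp.asboolP.
rewrite /ecrw; case: ex_minnP => m _ Hmin; apply: Hmin; apply/boolp.asboolP; exact: tp_ec.
Qed.
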